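(* For any finite simple graph $X$ and any $\pi\in S_X$, $\mathrm{Fix}(\mathbf{F}^\uparrow)=\mathrm{Fix}(\mathbf{F}^\downarrow)=\mathrm{Fix}(\mathbf{F}^\updownarrow)=\mathrm{Fix}(\mathbf{F}^\uparrow_\pi)=\mathrm{Fix}(\mathbf{F}^\downarrow_\pi)=\mathrm{Fix}(\mathbf{F}^\updownarrow_\pi)$, where $\mathrm{Fix}(\phi)$ denotes the set of fixed points of $\phi$.
   Context: Let $X$ be a finite simple graph with vertices $1,\dots,n$; $d(v)$ is the degree of $v$ and $n[v]$ the closed neighborhood of $v$. An extended vertex state is $s_v=(x_v,k_v)\in\{0,1\}\times\{1,\dots,d(v)+1\}$; $\mathcal{S}$ is the product of these sets. Let $\sigma(x[v])=|\{u\in n[v]:x_u=1\}|$. All vertex functions set $x_v'=1$ iff $\sigma(x[v])\ge k_v$ (else $0$). Increasing ($\uparrow$): $k_v'=k_v+1$ if $x_v=0$ and $\sigma(x[v])\ge k_v$, else $k_v$. Decreasing ($\downarrow$): $k_v'=k_v-1$ if $x_v=1$ and $\sigma(x[v])<k_v$, else $k_v$. Mixed ($\updownarrow$): both of these changes, $k_v$ unchanged otherwise. The local map $F^\star_v$ updates only coordinate $v$; for a permutation $\pi=(\pi_1,\dots,\pi_n)$, the SDS map is $\mathbf{F}^\star_\pi=F^\star_{\pi_n}\circ\cdots\circ F^\star_{\pi_1}$, and the GCA map $\mathbf{F}^\star$ applies the vertex function at all vertices simultaneously. *)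

(* Defs.v *)
From mathcomp Require Import all_boot all_order all_fingroup.
Set Implicit Arguments. Unset Strict Implicit. Unset Printing Implicit Defensive.

Definition simple_graph (n : nat) (e : rel 'I_n) : Prop :=
  irreflexive e /\ symmetric e.

Section SDS.
Variables (n : nat) (e : rel 'I_n).

Definition deg (v : 'I_n) : nat := #|[set u | e v u]|.
Definition cnbhd (v : 'I_n) : {set 'I_n} := [set u | (u == v) || e v u].

(* extended state: s v = (x_v, k_v) *)
Definition state := {ffun 'I_n -> bool * nat}.

Definition valid (s : state) : Prop :=
  forall v, 1 <= (s v).2 <= (deg v).+1.

Definition sigma (s : state) (v : 'I_n) : nat :=
  #|[set u in cnbhd v | (s u).1]|.

Inductive kind := Incr | Decr | Mixed.

Definition vfun (t : kind) (s : state) (v : 'I_n) : bool * nat :=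
  let x := (s v).1 in let k := (s v).2 in
  let sg := sigma s v in
  let x' := k <= sg in
  let k' :=
    match t with
    | Incr => if ~~ x && (k <= sg) then k.+1 else k
    | Decr => if x && (sg < k) then k.-1 else k
    | Mixed => if ~~ x && (k <= sg) then k.+1
               else if x && (sg < k) then k.-1 else k
    end in
  (x', k').

Definition Floc (t : kind) (v : 'I_n) (s : state) : state :=
  [ffun u => if u == v then vfun t s v else s u].

(* SDS map F_pi = F_{pi_n} o ... o F_{pi_1}, with pi_i = pi (i-1) *)
Definition SDS (t : kind) (pi : {perm 'I_n}) (s : state) : state :=
  foldl (fun acc i => Floc t (pi i) acc) s (enum 'I_n).

Definition GCA (t : kind) (s : state) : state := [ffun v => vfun t s v].

Definition Fix (phi : state -> state) : state -> Prop :=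
  fun s => valid s /\ phi s = s.

End SDS.

(* Main.v *)
Require Import Defs.
From mathcomp Require Import all_boot all_order all_fingroup.
From mathcomp Require Import zify.

Section P.
Variables (n : nat) (e : rel 'I_n).

Definition Cond (s : state n) := forall v, ((s v).2 <= sigma e s v) = (s v).1.

Lemma vfun_fix t s v : (vfun e t s v == s v) = (((s v).2 <= sigma e s v) == (s v).1).
Proof.
rewrite /vfun; move: (sigma e s v) => sg; case: (s v) => [x k] /=.
by case: t; case: x; case: (leqP k sg) => h //=; rewrite !xpair_eqE /= ?eqxx ?andbT //;
  idtac.
Qed.

Lemma cond_vfun t s : Cond s <-> forall v, vfun e t s v = s v.
Proof.
split=> H v; first by apply/eqP; rewrite vfun_fix H.
by have := eqxx (s v); rewrite -{1}(H v) vfun_fix => /eqP.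
Qed.

Lemma gca_fix t s : GCA e t s = s <-> Cond s.
Proof.
rewrite (cond_vfun t); split=> H.
  by move=> v; rewrite -{2}H /GCA ffunE.
by apply/ffunP=> v; rewrite ffunE H.
Qed.

Lemma floc_id t s v : vfun e t s v = s v -> Floc e t v s = s.
Proof. by move=> H; apply/ffunP=> u; rewrite ffunE; case: eqP => // ->. Qed.

Lemma foldl_other t l s u : u \notin l ->
  foldl (fun acc v => Floc e t v acc) s l u = s u.
Proof.
elim: l s => //= a l IH s; rewrite in_cons negb_or => /andP[ua ul].
by rewrite IH // ffunE (negbTE ua).
Qed.

Lemma foldl_fix t l s : uniq l -> foldl (fun acc v => Floc e t v acc) s l = s ->
  forall v, v \in l -> vfun e t s v = s v.
Proof.
elim: l s => //= a l IH s /andP[al ul] H.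
have Ha : vfun e t s a = s a.
  by rewrite -{2}H foldl_other // ffunE eqxx.
move: H; rewrite floc_id // => H v; rewrite in_cons => /orP[/eqP->//|].
exact: IH.
Qed.

Lemma foldl_all t l s : (forall v, vfun e t s v = s v) ->
  foldl (fun acc v => Floc e t v acc) s l = s.
Proof. by move=> H; elim: l => //= a l IH; rewrite floc_id. Qed.

Lemma foldl_map' t (pi : {perm 'I_n}) (l : seq 'I_n) s :
  foldl (fun acc i => Floc e t (pi i) acc) s l =
  foldl (fun acc v => Floc e t v acc) s (map pi l).
Proof. by elim: l s => //= a l IH s; rewrite IH. Qed.

Lemma sds_fix t pi s : SDS e t pi s = s <-> Cond s.
Proof.
rewrite /SDS foldl_map' (cond_vfun t).
split=> [H v|H]; last exact: foldl_all.
apply: (foldl_fix _ _ _ _ H).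
  by rewrite map_inj_uniq ?enum_uniq //; apply: perm_inj.
by rewrite -(permKV pi v) map_f // mem_enum.
Qed.

End P.

Theorem proposition4p1 (n : nat) (e : rel 'I_n) (pi : {perm 'I_n}) :
  simple_graph e ->
  forall s : state n,
    (Fix e (GCA e Incr) s <-> Fix e (GCA e Decr) s) /\
    (Fix e (GCA e Decr) s <-> Fix e (GCA e Mixed) s) /\
    (Fix e (GCA e Mixed) s <-> Fix e (SDS e Incr pi) s) /\
    (Fix e (SDS e Incr pi) s <-> Fix e (SDS e Decr pi) s) /\
    (Fix e (SDS e Decr pi) s <-> Fix e (SDS e Mixed pi) s).
Proof.
move=> _ s; rewrite /Fix !gca_fix !sds_fix.
split; last split; last split; last split; split; case=> a b; split=> //; by [apply/gca_fix; move/gca_fix: b | apply/sds_fix; move/gca_fix: b | apply/gca_fix; move/sds_fix: b | apply/sds_fix; move/sds_fix: b].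
Qed.
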